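(* Let $G$ and $G'$ be finite groups. Then $G$ and $G'$ are both almost monomial if and only if the direct product $G\times G'$ is almost monomial.
   Context: A finite group $G$ is called almost monomial if for every two distinct complex irreducible characters $\chi$ and $\psi$ of $G$ there exist a subgroup $H\le G$ and a linear (degree one) character $\varphi$ of $H$ such that the induced character $\operatorname{Ind}_H^G\varphi$ contains $\chi$ (i.e. $\langle \operatorname{Ind}_H^G\varphi,\chi\rangle\neq 0$) and does not contain $\psi$ (i.e. $\langle \operatorname{Ind}_H^G\varphi,\psi\rangle=0$), where $\langle\,,\rangle$ is the usual inner product of class functions. *)

(* Defs.v *)
From HB Require Import structures.
From mathcomp Require Import all_boot all_order all_algebra all_fingroup all_solvable all_field all_character.
Set Implicit Arguments. Unset Strict Implicit. Unset Printing Implicit Defensive.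
Import GRing.Theory Num.Theory.
Local Open Scope ring_scope.

Definition almost_monomial (gT : finGroupType) (G : {group gT}) : Prop :=
  forall i j : Iirr G, 'chi[G]_i != 'chi[G]_j ->
    exists (H : {group gT}) (phi : 'CF(H)),
      [/\ H \subset G, phi \is a linear_char,
          '['Ind[G, H] phi, 'chi[G]_i] != 0 &
          '['Ind[G, H] phi, 'chi[G]_j] = 0].

(* Main.v *)
Require Import Defs.
From HB Require Import structures.
From mathcomp Require Import all_boot all_order all_algebra all_fingroup all_solvable all_field all_character.
Set Implicit Arguments. Unset Strict Implicit. Unset Printing Implicit Defensive.
Import GRing.Theory Num.Theory.
Local Open Scope ring_scope.
Lemma lift_morph (aT rT : finGroupType) (D K : {group aT}) (f : {morphism D >-> rT})
  (lam : 'CF(K)) :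
  K \subset D -> ('ker_K f)%g \subset cfker lam -> exists phi : 'CF(f @* K), cfMorph phi = lam.
Proof.
move=> sKD kerL.
have nsN : (('ker_K f) <| K)%g.
  by rewrite /normal subsetIl normsI ?normG ?(subset_trans sKD) ?ker_norm.
have [sNK nNK] := andP nsN.
have [g injg im_g] := first_isom_loc f sKD.
have iso : isom (K / 'ker_K f)%g (f @* K) g.
  by apply/isomP; split => //; rewrite im_g.
exists (cfIsom iso (lam / ('ker_K f)%g)%CF).
apply/cfun_inP => x Kx; rewrite cfMorphE //.
have -> : f x = g (coset (('ker_K f)%g) x).
  apply/set1_inj; rewrite -?morphim_set1 ?im_g ?(subsetP nNK) ?sub1set ?mem_quotient //.
  by rewrite (subsetP sKD).
by rewrite cfIsomE ?mem_quotient // cfQuoE.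
Qed.

Lemma cfdot_Res_eq (gT : finGroupType) (H0 H L : {group gT}) (phi : 'CF(H)) (chi : 'CF(L)) :
  (H0 :=: H)%g -> '['Res[H0] phi, 'Res[H0] chi] = '[phi, 'Res[H] chi].
Proof.
move=> E; have EG : H0 = H by apply: val_inj.
by subst H0; rewrite cfRes_id.
Qed.

Lemma step (aT r1 r2 : finGroupType) (D1 D2 P K : {group aT})
  (f1 : {morphism D1 >-> r1}) (f2 : {morphism D2 >-> r2}) (H : {group r1})
  (phi : 'CF(H)) (chi : 'CF(f1 @* P)) (psi : 'CF(f2 @* P)) :
  P \subset D1 -> P \subset D2 -> K \subset P -> (f1 @* K)%g = H :> {set r1} ->
  (f2 @* K)%g = 1%g :> {set r2} ->
 '['Ind[P] (cfMorph ('Res[f1 @* K] phi)), cfMorph chi * cfMorph psi] =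
   (psi 1%g)^* * '['Ind[f1 @* P] phi, chi].
Proof.
move=> sP1 sP2 sKP E1 E2.
have sK1 := subset_trans sKP sP1; have sK2 := subset_trans sKP sP2.
have sHP : (H \subset f1 @* P)%g by rewrite -E1 morphimS.
rewrite -Frobenius_reciprocity.
have -> : 'Res[K] (cfMorph chi * cfMorph psi) = psi 1%g *: cfMorph ('Res[f1 @* K] chi).
  apply/cfun_inP => x Kx.
  have Px := subsetP sKP x Kx.
  have f2x : f2 x = 1%g.
    apply/set1P; have : f2 x \in (f2 @* K)%g by rewrite mem_morphim // (subsetP sK2).
    by rewrite E2.
  rewrite cfResE // !cfunE !cfMorphE // ?f2x // cfResE //.
    by rewrite mulrC.
  by rewrite morphimS.
  by rewrite mem_morphim // (subsetP sK1).
rewrite cfdotZr (cfMorph_iso sK1) cfdot_Res_eq // Frobenius_reciprocity.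
done.
Qed.
Lemma am_morph (aT rT : finGroupType) (D P : {group aT}) (f : {morphism D >-> rT}) :
  P \subset D -> almost_monomial P -> almost_monomial (f @* P)%G.
Proof.
move=> sPD amP i j neq.
have /irrP[i' Ei'] : cfMorph 'chi[f @* P]_i \in irr P by rewrite cfMorph_irr ?mem_irr.
have /irrP[j' Ej'] : cfMorph 'chi[f @* P]_j \in irr P by rewrite cfMorph_irr ?mem_irr.
have neq' : 'chi_i' != 'chi_j'.
  by rewrite -Ei' -Ej' (inj_eq (cfMorph_inj sPD)).
have [K [lam [sKP linL nzi zj]]] := amP i' j' neq'.
have sKD := subset_trans sKP sPD.
have key : forall k, '['Ind[P] lam, cfMorph 'chi[f @* P]_k] =
    '[lam, cfMorph ('Res[f @* K] 'chi_k)].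
  by move=> k; rewrite -Frobenius_reciprocity cfResMorph.
have kerL : ('ker_K f \subset cfker lam)%g.
  have Nlam : lam \in irr K by apply: lin_char_irr.
  have /irrP[l El] := Nlam.
  have Nc : cfMorph (G := K) ('Res[f @* K] 'chi[f @* P]_i) \is a character.
    by rewrite cfMorph_char ?cfRes_char ?irr_char.
  have Cl : l \in irr_constt (cfMorph (G := K) ('Res[f @* K] 'chi[f @* P]_i)).
    rewrite irr_consttE -El cfdotC conjC_eq0 -key Ei'; exact: nzi.
  rewrite El; apply: subset_trans (cfker_constt Nc Cl); rewrite cfker_morph // setIS ?ker_sub_pre //.
have [phi Ephi] := lift_morph sKD kerL.
exists (f @* K)%G, phi; split.
- exact: morphimS.
- by rewrite -(cfMorph_lin_charE _ sKD) Ephi.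
- by rewrite -Frobenius_reciprocity -(cfMorph_iso sKD) Ephi -key Ei'.
- by rewrite -Frobenius_reciprocity -(cfMorph_iso sKD) Ephi -key Ej'.
Qed.

Section Prod.
Variables (gT gT' : finGroupType) (G : {group gT}) (G' : {group gT'}).
Local Notation P := (setX_group G G').
Local Notation f1 := (@fst_morphism gT gT').
Local Notation f2 := (@snd_morphism gT gT').

Lemma kerf1 : ('ker_P f1 \subset setX 1 G')%g.
Proof.
apply/subsetP => -[x y]; rewrite !inE /=.
by case/andP => /andP[_ ->] ->.
Qed.

Lemma kerf2 : ('ker_P f2 \subset setX G 1)%g.
Proof.
apply/subsetP => -[x y]; rewrite !inE /=.
by case/andP => /andP[-> _] ->.
Qed.

Lemma irr_prod (k : Iirr P) : exists (i : Iirr (f1 @* P)%G) (j : Iirr (f2 @* P)%G),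
  'chi_k = cfMorph 'chi_i * cfMorph 'chi_j.
Proof.
have KxH := setX_dprod G G'.
rewrite -(inv_dprod_IirrK KxH k); case: (inv_dprod_Iirr KxH k) => a b.
rewrite dprod_IirrE /cfDprod.
have kl : ('ker_P f1 \subset cfker (cfDprodl KxH 'chi_a))%g.
  apply: subset_trans kerf1 _; exact: (mulG_sub (dprodW (cfker_dprodl KxH 'chi_a))).2.
have kr : ('ker_P f2 \subset cfker (cfDprodr KxH 'chi_b))%g.
  apply: subset_trans kerf2 _; exact: (mulG_sub (dprodW (cfker_dprodr KxH 'chi_b))).1.
have [phi1 E1] := lift_morph (subsetT P) kl.
have [phi2 E2] := lift_morph (subsetT P) kr.
have /irrP[i Ei] : phi1 \in irr (f1 @* P)%G.
  by rewrite -(cfMorph_irr _ (subsetT P)) E1 cfDprodl_irr mem_irr.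
have /irrP[j Ej] : phi2 \in irr (f2 @* P)%G.
  by rewrite -(cfMorph_irr _ (subsetT P)) E2 cfDprodr_irr mem_irr.
by exists i, j; rewrite -Ei -Ej E1 E2.
Qed.

Lemma am_prod : almost_monomial (f1 @* P)%G -> almost_monomial (f2 @* P)%G ->
  almost_monomial P.
Proof.
move=> am1 am2 k1 k2 neq.
have [i1 [j1 E1]] := irr_prod k1; have [i2 [j2 E2]] := irr_prod k2.
have imG : (f1 @* P)%g = G by rewrite morphim_fstX.
have imG' : (f2 @* P)%g = G' by rewrite morphim_sndX.
have [Ei | ni] := eqVneq 'chi_i1 'chi_i2.
- have nj : 'chi_j1 != 'chi_j2.
    by apply: contraNneq neq => Ej; rewrite E1 E2 Ei Ej.
  have [H [phi [sH lin nz z]]] := am2 j1 j2 nj.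
  have sHG' : H \subset G' by rewrite -imG'.
  have sKP : setX_group 1 H \subset P by rewrite setXS ?sub1G.
  have e2 : (f2 @* setX_group 1 H)%g = H by rewrite morphim_sndX.
  have e1 : (f1 @* setX_group 1 H)%g = 1%g by rewrite morphim_fstX.
  exists (setX_group 1 H), (cfMorph ('Res[f2 @* setX_group 1 H] phi)); split => //.
  + by rewrite cfMorph_lin_char ?cfRes_lin_char.
  + rewrite E1 mulrC step ?subsetT //.
    by rewrite mulf_neq0 // conjC_eq0 irr1_neq0.
  + by rewrite E2 mulrC step ?subsetT // z mulr0.
- have [H [phi [sH lin nz z]]] := am1 i1 i2 ni.
  have sHG : H \subset G by rewrite -imG.
  have sKP : setX_group H 1 \subset P by rewrite setXS ?sub1G.
  have e1 : (f1 @* setX_group H 1)%g = H by rewrite morphim_fstX.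
  have e2 : (f2 @* setX_group H 1)%g = 1%g by rewrite morphim_sndX.
  exists (setX_group H 1), (cfMorph ('Res[f1 @* setX_group H 1] phi)); split => //.
  + by rewrite cfMorph_lin_char ?cfRes_lin_char.
  + rewrite E1 step ?subsetT //.
    by rewrite mulf_neq0 // conjC_eq0 irr1_neq0.
  + by rewrite E2 step ?subsetT // z mulr0.
Qed.
End Prod.

Theorem theorem2p3 (gT gT' : finGroupType) (G : {group gT}) (G' : {group gT'}) :
  (almost_monomial G /\ almost_monomial G') <->
  almost_monomial (setX_group G G').
Proof.
have E1 : ((@fst_morphism gT gT') @* setX_group G G')%G = G.
  by apply/val_inj; rewrite /= morphim_fstX.
have E2 : ((@snd_morphism gT gT') @* setX_group G G')%G = G'.
  by apply/val_inj; rewrite /= morphim_sndX.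
split.
- by case=> amG amG'; apply: am_prod; rewrite ?E1 ?E2.
- move=> amP; split.
  + by have := am_morph (f := @fst_morphism gT gT') (subsetT (setX_group G G')) amP; rewrite E1.
  + by have := am_morph (f := @snd_morphism gT gT') (subsetT (setX_group G G')) amP; rewrite E2.
Qed.
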